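(* Let $G$ be a non-compact, compactly generated, totally disconnected, locally compact group, and let $H\le\mathbb{Q}^{+}$ be the image of its modular function. Let $$A=\Big\{\sum_{i=1}^k (p_i+q_i)\ \Big|\ k\ge 1,\ p_1,\dots,p_k,q_1,\dots,q_k \text{ positive integers},\ \Big\langle \tfrac{p_1}{q_1},\dots,\tfrac{p_k}{q_k}\Big\rangle = H\Big\}.$$ Then every Cayley–Abels graph of $G$ has degree at least $\min(A)$. In particular, if $H$ is cyclic, generated by $p/q$ with $p,q$ coprime positive integers, then every Cayley–Abels graph of $G$ has degree at least $p+q$, i.e. $\mathrm{md}(G)\ge p+q$.
   Context: A Cayley–Abels graph for a totally disconnected, locally compact group $G$ is a connected, locally finite simple graph with an action of $G$ by automorphisms that is vertex-transitive with compact open vertex stabilizers; $\mathrm{md}(G)$ is the minimal degree of such a graph. The modular function $\Delta\colon G\to\mathbb{R}^+$ is defined via a right-invariant Haar measure $\mu$ by $\mu(gA)=\Delta(g)\mu(A)$; its image is a subgroup of the multiplicative group $\mathbb{Q}^+$ of positive rationals. *)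

(* Defs.v *)
From HB Require Import structures.
From Stdlib Require Import Relations.Relation_Operators.
From mathcomp Require Import all_boot all_order all_algebra.
From mathcomp Require Import all_classical all_reals all_analysis.
Set Implicit Arguments. Unset Strict Implicit. Unset Printing Implicit Defensive.
Import Order.TTheory GRing.Theory Num.Theory.
Local Open Scope classical_set_scope.
Local Open Scope ring_scope.

Definition borel (T : ptopologicalType) : measurableType _ := g_sigma_algebraType (@open T).

Section TDLC.
Variables (T : ptopologicalType) (mul : T -> T -> T) (inv : T -> T) (one : T).

Definition is_group :=
  [/\ forall x y z, mul x (mul y z) = mul (mul x y) z,
      forall x, mul one x = x, forall x, mul x one = x,
      forall x, mul (inv x) x = one & forall x, mul x (inv x) = one].

Definition is_tdlc_group :=
  [/\ is_group,
      continuous (fun p : T * T => mul p.1 p.2),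
      continuous inv,
      hausdorff_space T &
      locally_compact [set: T] /\ totally_disconnected [set: T]].

Definition compactly_generated :=
  exists K : set T, compact K /\
    forall S : set T, K `<=` S -> S one ->
      (forall x y, S x -> S y -> S (mul x y)) ->
      (forall x, S x -> S (inv x)) -> S = [set: T].
End TDLC.

Definition right_haar (T : ptopologicalType) (mul : T -> T -> T) (R : realType)
    (mu : {measure set (borel T) -> \bar R}) :=
  [/\ (forall A : set (borel T), measurable A -> forall g : T,
         mu [set mul a g | a in A] = mu A),
      (forall K : set T, compact K -> (mu K < +oo)%E),
      (forall U : set T, open U -> U !=set0 -> (0 < mu U)%E),
      (forall A : set (borel T), measurable A ->
         mu A = ereal_inf [set mu U | U in [set U : set T | open U /\ A `<=` U]]) &
      (forall U : set T, open U ->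
         mu U = ereal_sup [set mu K | K in [set K : set T | compact K /\ K `<=` U]])].

Definition modular_function_of (T : ptopologicalType) (mul : T -> T -> T) (R : realType)
    (mu : {measure set (borel T) -> \bar R}) (Delta : T -> R) :=
  forall (g : T) (A : set (borel T)), measurable A ->
    mu [set mul g a | a in A] = ((Delta g)%:E * mu A)%E.

Definition gen_mulgroup (R : realType) (r : seq R) : set R :=
  [set x | exists e : seq int, size e = size r /\
     x = \prod_(i < size r) (r`_i) ^ (e`_i)].

Definition cayley_abels_graph (T : ptopologicalType) (mul : T -> T -> T) (one : T)
    (V : Type) (adj : V -> V -> Prop) (act : T -> V -> V) :=
  [/\ (forall v w, adj v w -> adj w v) /\ (forall v, ~ adj v v),
      (forall v w, clos_refl_trans V adj v w),
      (forall v, finite_set [set w | adj v w]),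
      ((forall v, act one v = v) /\ (forall g h v, act (mul g h) v = act g (act h v))) /\
      (forall g v w, adj v w <-> adj (act g v) (act g w)) &
      (forall v w, exists g, act g v = w) /\
      (forall v, open [set g | act g v = v] /\ compact [set g | act g v = v])].

Definition sums_set (R : realType) (H : set R) : set nat :=
  [set a | exists ps : seq (nat * nat),
     [/\ (0 < size ps)%N, all (fun pq => (0 < pq.1)%N && (0 < pq.2)%N) ps,
        gen_mulgroup [seq (pq.1)%:R / (pq.2)%:R | pq <- ps] = H &
        a = \sum_(pq <- ps) (pq.1 + pq.2)%N]].

(* Main.v *)
Require Import Defs.
From Stdlib Require Import Relations.Relation_Operators Relations.Operators_Properties.
From mathcomp Require Import all_boot all_order all_algebra.
From mathcomp Require Import all_classical all_reals all_analysis.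
Unset Printing Implicit Defensive.
Import Order.TTheory GRing.Theory Num.Theory.
Local Open Scope classical_set_scope.
Local Open Scope ring_scope.

Section Gen.
Variable R : realType.
Implicit Types (r : seq R) (x y : R).

Lemma gen1 r : gen_mulgroup r 1.
Proof.
exists (nseq (size r) 0); split; first by rewrite size_nseq.
by rewrite big1 // => i _; rewrite nth_nseq if_same expr0z.
Qed.

Lemma genM r x y : (forall i, (i < size r)%N -> r`_i != 0) ->
  gen_mulgroup r x -> gen_mulgroup r y -> gen_mulgroup r (x * y).
Proof.
move=> nz [e1 [s1 ->]] [e2 [s2 ->]].
exists (mkseq (fun i => e1`_i + e2`_i) (size r)); split; first by rewrite size_mkseq.
rewrite -big_split /=; apply: eq_bigr => i _; rewrite nth_mkseq // exprzDr //.
by rewrite unitfE nz.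
Qed.

Lemma genV r x : gen_mulgroup r x -> gen_mulgroup r x^-1.
Proof.
move=> [e1 [s1 ->]]; exists [seq - z | z <- e1]; split; first by rewrite size_map.
rewrite -prodfV; apply: eq_bigr => i _.
by rewrite (nth_map 0) ?invr_expz // s1.
Qed.

Lemma gen_nth r i : (i < size r)%N -> gen_mulgroup r r`_i.
Proof.
move=> hi; exists (mkseq (fun j => ((j == i) : nat)%:Z) (size r)); split.
  by rewrite size_mkseq.
rewrite (bigD1 (Ordinal hi)) //= big1 ?mulr1.
  by rewrite nth_mkseq // eqxx expr1z.
move=> j hj; rewrite nth_mkseq //.
have -> : (j == i :> nat) = false by apply/negbTE; move: hj; apply: contra => /eqP h; apply/eqP; apply: val_inj.
by rewrite expr0z.
Qed.

Lemma gen_sub r (G : set R) : G 1 -> (forall x y, G x -> G y -> G (x * y)) ->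
  (forall x, G x -> G x^-1) -> (forall i, (i < size r)%N -> G r`_i) ->
  gen_mulgroup r `<=` G.
Proof.
move=> G1 GM GV Gr x [e0 [se ->]].
apply: (big_ind G) => // i _.
have Gp (n : nat) : G (r`_i ^+ n) by elim: n => [|n IH]; rewrite ?expr0 // exprS; apply: GM => //; apply: Gr.
case: (e0`_i) => n; first exact: Gp.
by apply: GV; apply: Gp.
Qed.

Lemma gen_single x y : gen_mulgroup [:: x] y -> exists z : int, y = x ^ z.
Proof.
move=> [e0 [se ->]]; exists e0`_0.
by rewrite big_ord1.
Qed.
Lemma gen_mem r x : x \in r -> gen_mulgroup r x.
Proof. by move=> xr; rewrite -(nth_index 0 xr); apply: gen_nth; rewrite index_mem. Qed.
End Gen.


Section Main.
Variables (T : ptopologicalType) (mul : T -> T -> T) (inv : T -> T) (one : T).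
Hypothesis HG : is_tdlc_group mul inv one.

Lemma mulA x y z : mul x (mul y z) = mul (mul x y) z.
Proof. by case: HG => -[]. Qed.
Lemma mul1g x : mul one x = x. Proof. by case: HG => -[]. Qed.
Lemma mulg1 x : mul x one = x. Proof. by case: HG => -[]. Qed.
Lemma mulVg x : mul (inv x) x = one. Proof. by case: HG => -[]. Qed.
Lemma mulgV x : mul x (inv x) = one. Proof. by case: HG => -[]. Qed.
Lemma mulKg x y : mul (inv x) (mul x y) = y.
Proof. by rewrite mulA mulVg mul1g. Qed.
Lemma mulKVg x y : mul x (mul (inv x) y) = y.
Proof. by rewrite mulA mulgV mul1g. Qed.
Lemma mulgK x y : mul (mul y x) (inv x) = y.
Proof. by rewrite -mulA mulgV mulg1. Qed.
Lemma mulgKV x y : mul (mul y (inv x)) x = y.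
Proof. by rewrite -mulA mulVg mulg1. Qed.

Lemma cont_mull c : continuous (mul c).
Proof.
move=> x; case: HG => _ hc _ _ _.
have -> : mul c = (fun p : T * T => mul p.1 p.2) \o (fun y => (c, y)) by [].
apply: continuous_comp; last exact: hc.
apply: cvg_pair => /=; [exact: cvg_cst | exact: cvg_id].
Qed.
Lemma cont_mulr c : continuous (mul^~ c).
Proof.
move=> x; case: HG => _ hc _ _ _.
have -> : mul^~ c = (fun p : T * T => mul p.1 p.2) \o (fun y => (y, c)) by [].
apply: continuous_comp; last exact: hc.
apply: cvg_pair => /=; [exact: cvg_id | exact: cvg_cst].
Qed.

Lemma imgl c (A : set T) : [set mul c a | a in A] = mul (inv c) @^-1` A.
Proof.
apply/seteqP; split => x /=.
  by case=> a Aa <-; rewrite mulKg.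
by move=> Ax; exists (mul (inv c) x) => //; rewrite mulKVg.
Qed.
Lemma imgr c (A : set T) : [set mul a c | a in A] = mul^~ (inv c) @^-1` A.
Proof.
apply/seteqP; split => x /=.
  by case=> a Aa <-; rewrite mulgK.
by move=> Ax; exists (mul x (inv c)) => //; rewrite mulgKV.
Qed.
Lemma open_imgl c (A : set T) : open A -> open [set mul c a | a in A].
Proof. by move=> oA; rewrite imgl; apply: open_comp => // x _; apply: cont_mull. Qed.
Lemma open_imgr c (A : set T) : open A -> open [set mul a c | a in A].
Proof. by move=> oA; rewrite imgr; apply: open_comp => // x _; apply: cont_mulr. Qed.
Lemma compact_imgl c (A : set T) : compact A -> compact [set mul c a | a in A].
Proof. by move=> cA; apply: continuous_compact => //; apply: continuous_subspaceT => x; apply: cont_mull. Qed.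

Lemma open_meas (A : set T) : open A -> measurable (A : set (borel T)).
Proof. by move=> oA; apply: sub_sigma_algebra. Qed.

Variables (R : realType) (mu : {measure set (borel T) -> \bar R}).
Hypothesis Hmu : right_haar mul mu.
Variable Delta : T -> R.
Hypothesis HDelta : modular_function_of mul mu Delta.
Variables (V : Type) (adj : V -> V -> Prop) (act : T -> V -> V).
Hypothesis HCA : cayley_abels_graph mul one adj act.
Variable v : V.

Definition Stab x := [set g | act g x = x].

Lemma act1 x : act one x = x. Proof. by case: HCA => _ _ _ [[]]. Qed.
Lemma actM g h x : act (mul g h) x = act g (act h x). Proof. by case: HCA => _ _ _ [[]]. Qed.
Lemma actK g x : act (inv g) (act g x) = x. Proof. by rewrite -actM mulVg act1. Qed.
Lemma actKV g x : act g (act (inv g) x) = x. Proof. by rewrite -actM mulgV act1. Qed.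
Lemma adj_act g x y : adj x y <-> adj (act g x) (act g y). Proof. by case: HCA => _ _ _ [_]. Qed.
Lemma adj_sym x y : adj x y -> adj y x. Proof. by case: HCA => -[hs _] *; apply: hs. Qed.
Lemma trans_act x y : exists g, act g x = y. Proof. by case: HCA => _ _ _ _ []. Qed.
Lemma open_stab x : open (Stab x). Proof. by case: HCA => _ _ _ _ [_ /(_ x) []]. Qed.
Lemma compact_stab x : compact (Stab x). Proof. by case: HCA => _ _ _ _ [_ /(_ x) []]. Qed.
Lemma stab1 x : Stab x one. Proof. exact: act1. Qed.

Lemma mu_open_pos (A : set T) : open A -> A !=set0 -> (0 < mu A)%E.
Proof. by case: Hmu => _ _ H _ _; apply: H. Qed.
Lemma mu_compact_fin (A : set T) : compact A -> (mu A < +oo)%E.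
Proof. by case: Hmu => _ H _ _ _; apply: H. Qed.
Lemma mu_right (A : set T) g : open A -> mu [set mul a g | a in A] = mu A.
Proof. by case: Hmu => H _ _ _ _ oA; apply: H; apply: open_meas. Qed.
Lemma mu_left (A : set T) g : open A -> mu [set mul g a | a in A] = ((Delta g)%:E * mu A)%E.
Proof. by move=> oA; apply: HDelta; apply: open_meas. Qed.

Lemma fin_pos_mu (A : set T) : open A -> compact A -> A !=set0 ->
  exists2 m : R, mu A = m%:E & 0 < m.
Proof.
move=> oA cA nA; have h1 := mu_open_pos _ oA nA; have h2 := mu_compact_fin _ cA.
move: h1 h2; case: (mu A) => [r| |] //= h1 _; exists r => //.
Qed.

Lemma mu_stab x : exists2 m : R, mu (Stab x) = m%:E & 0 < m.
Proof. by apply: fin_pos_mu; [exact: open_stab|exact: compact_stab|exists one; exact: stab1]. Qed.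

Lemma Delta_pos g : 0 < Delta g.
Proof.
have [m hm m0] := mu_stab v.
have h1 := mu_open_pos _ (open_imgl g _ (open_stab v)) (ex_intro _ (mul g one) (ex_intro2 _ _ one (stab1 v) erefl)).
have h2 := mu_compact_fin _ (compact_imgl g _ (compact_stab v)).
rewrite mu_left ?hm in h1; last exact: open_stab.
by move: h1; rewrite -EFinM lte_fin pmulr_lgt0.
Qed.

Lemma DeltaM g h : Delta (mul g h) = Delta g * Delta h.
Proof.
have [m hm m0] := mu_stab v.
have e : [set mul (mul g h) a | a in Stab v] = [set mul g b | b in [set mul h a | a in Stab v]].
  apply/seteqP; split => x /=.
    by case=> a Aa <-; exists (mul h a) => //; [exists a | rewrite mulA].
  by case=> b [a Aa <-] <-; exists a => //; rewrite mulA.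
have := mu_left _ (mul g h) (open_stab v).
rewrite e (mu_left _ g (open_imgl h _ (open_stab v))) (mu_left _ h (open_stab v)).
have m0' : m != 0 by rewrite gt_eqF.
rewrite hm muleA -!EFinM => E0.
have E := EFin_inj E0.
by apply: (mulIf m0'); rewrite E.
Qed.

Lemma img_stab u x : Stab x u -> [set mul u a | a in Stab x] = Stab x.
Proof.
move=> hu; apply/seteqP; split => y /=.
  by case=> a ha <-; rewrite /Stab /= actM ha hu.
move=> hy; exists (mul (inv u) y); last by rewrite mulKVg.
by rewrite /Stab /= actM hy -{1}hu actK.
Qed.

Lemma Delta1 u x : Stab x u -> Delta u = 1.
Proof.
move=> hu; have [m hm m0] := mu_stab x.
have := mu_left _ u (open_stab x); rewrite img_stab // hm -EFinM => E0.
have E := EFin_inj E0.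
have m0' : m != 0 by rewrite gt_eqF.
by apply: (mulIf m0'); rewrite mul1r -E.
Qed.

Lemma Delta_one : Delta one = 1.
Proof. exact: (Delta1 one v (stab1 v)). Qed.

Lemma Delta_eq g h x : act g x = act h x -> Delta g = Delta h.
Proof.
move=> E; have hu : Stab x (mul (inv g) h) by rewrite /Stab /= actM -E actK.
by rewrite -{1}(mulKVg g h) DeltaM (Delta1 _ _ hu) mulr1.
Qed.

Lemma DeltaV g : Delta (inv g) = (Delta g)^-1.
Proof.
have := DeltaM g (inv g); rewrite mulgV Delta_one => E.
have g0 : Delta g != 0 by rewrite gt_eqF // Delta_pos.
by apply: (mulfI g0); rewrite -E mulfV.
Qed.

Variables (d : nat) (e : 'I_d -> V).
Hypothesis e_inj : injective e.
Hypothesis e_adj : forall i, adj v (e i).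
Hypothesis e_surj : forall w, adj v w -> exists i, e i = w.

Definition Ob (w : V) : {set 'I_d} := [set j | `[< exists u, Stab v u /\ act u w = e j >]].

Lemma ObP w j : reflect (exists u, Stab v u /\ act u w = e j) (j \in Ob w).
Proof. by rewrite inE; apply: asboolP. Qed.

Lemma count_orbit w k : adj v w -> mu (Stab v `&` Stab w) = k%:E ->
  mu (Stab v) = (k *+ #|Ob w|)%:E.
Proof.
move=> avw hk.
pose F (j : 'I_d) := [set u | Stab v u /\ act u w = e j].
have oK : open (Stab v `&` Stab w) by apply: openI; apply: open_stab.
have FE j : j \in Ob w -> exists u, Stab v u /\ F j = [set mul u a | a in Stab v `&` Stab w].
  move=> /ObP [u [hu hw]]; exists u; split => //.
  apply/seteqP; split => y /=.
    case=> hy hyw; exists (mul (inv u) y); last by rewrite mulKVg.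
    split; first by rewrite /Stab /= actM hy -{1}hu actK.
    by rewrite /Stab /= actM hyw -hw actK.
  case=> a [ha haw] <-; split; first by rewrite /Stab /= actM ha hu.
  by rewrite actM haw hw.
have SE : Stab v = \big[setU/set0]_(j < d | j \in Ob w) F j.
  rewrite -bigcup_pred; apply/seteqP; split => y /=.
    move=> hy; have avy : adj v (act y w) by have := proj1 (adj_act y v w) avw; rewrite hy.
    have [j hj] := e_surj _ avy; exists j; last by split.
    by apply/ObP; exists y.
  by case=> j _ [].
rewrite {1}SE measure_bigsetU_ord_cond.
- rewrite -sumr_const -sumEFin; apply: eq_bigr => j hj.
  have [u [hu ->]] := FE j hj.
  by have := mu_left _ u oK; rewrite (Delta1 _ _ hu) mul1e hk; apply.
- move=> j hj; have [u [hu ->]] := FE j hj.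
  by apply: open_meas; apply: open_imgl.
- move=> i j _ _ [y [[_ h1] [_ h2]]]; apply: e_inj; by rewrite -h1 -h2.
Qed.


Lemma adj_inv g : adj v (act g v) -> adj v (act (inv g) v).
Proof.
move=> h; apply: adj_sym; have := proj1 (adj_act (inv g) _ _) h.
by rewrite actK.
Qed.

Lemma ratio g : adj v (act g v) ->
  Delta g * (#|Ob (act g v)|)%:R = (#|Ob (act (inv g) v)|)%:R.
Proof.
move=> h; set w := act g v; set a := act (inv g) v.
have ha : adj v a by apply: adj_inv.
set K := Stab v `&` Stab w; set K' := Stab v `&` Stab a.
have oK : open K by apply: openI; apply: open_stab.
have oK' : open K' by apply: openI; apply: open_stab.
have eK : K' = [set mul (inv g) b | b in [set mul c g | c in K]].
  apply/seteqP; split => x /=.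
    case=> hx1 hx2; exists (mul (mul (mul g x) (inv g)) g); last by rewrite mulgKV mulKg.
    exists (mul (mul g x) (inv g)) => //; split.
      by rewrite /Stab /= !actM -/a hx2 actKV.
    by rewrite /Stab /= /w !actM actK hx1.
  case=> b [c [hc1 hc2] <-] <-; split.
    by rewrite /Stab /= !actM -/w hc2 /w actK.
  by rewrite /Stab /= /a !actM actKV hc1.
have [m hm m0] := mu_stab v.
have Kfin : (mu K <= mu (Stab v))%E.
  by apply: le_measure; rewrite ?inE; [apply: open_meas|apply: open_meas; apply: open_stab|move=> x []].
have Kpos : (0 < mu K)%E by apply: mu_open_pos => //; exists one; split; apply: stab1.
have [k hk k0] : exists2 k : R, mu K = k%:E & 0 < k.
  move: Kfin Kpos; rewrite hm; case: (mu K) => [r| |] //= _ h0; by exists r.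
have hK' : mu K' = ((Delta g)^-1 * k)%:E.
  have := mu_left [set mul c g | c in K] (inv g) (open_imgr g K oK).
  rewrite -eK => ->; have := mu_right K g oK; move=> ->.
  by rewrite hk DeltaV EFinM.
have c1 := count_orbit _ _ h hk; have c2 := count_orbit _ _ ha hK'.
rewrite c1 in c2.
have E := EFin_inj c2.
have g0 : Delta g != 0 by rewrite gt_eqF // Delta_pos.
have k0' : k != 0 by rewrite gt_eqF.
rewrite -(mulr_natr k) -(mulr_natr (_ * k)) in E.
by apply: (mulfI k0'); rewrite /w mulrCA E mulrA mulrA mulfV // mul1r.
Qed.

Variables (gs : 'I_d -> T) (rv : 'I_d -> 'I_d).
Hypothesis gsP : forall j, act (gs j) v = e j.
Hypothesis rvP : forall j, e (rv j) = act (inv (gs j)) v.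

Definition O j := Ob (e j).

Lemma stabV u : Stab v u -> Stab v (inv u).
Proof. by rewrite /Stab /= => hu; rewrite -{1}hu actK. Qed.
Lemma stabM u u' : Stab v u -> Stab v u' -> Stab v (mul u u').
Proof. by rewrite /Stab /= => hu hu'; rewrite actM hu' hu. Qed.

Lemma O_self j : j \in O j.
Proof. by apply/ObP; exists one; split; [apply: stab1 | rewrite act1]. Qed.

Lemma O_eq j k : k \in O j -> O k = O j.
Proof.
move=> /ObP [u [hu huk]]; apply/setP => l; apply/ObP/ObP => -[u' [hu' hl]].
  by exists (mul u' u); split; [apply: stabM | rewrite actM huk].
exists (mul u' (inv u)); split; first by apply: stabM => //; apply: stabV.
by rewrite actM -huk actK.
Qed.
Arguments O_eq {j k}.

Lemma O_disj j k l : l \in O j -> l \in O k -> O j = O k.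
Proof. by move=> /O_eq <- /O_eq <-. Qed.
Arguments O_disj {j k l}.

Lemma O_rv j k : k \in O j -> rv k \in O (rv j).
Proof.
move=> /ObP [u [hu huk]]; apply/ObP.
exists (mul (inv (gs k)) (mul u (gs j))); split.
  by rewrite /Stab /= !actM gsP huk -gsP actK.
by rewrite !rvP !actM actKV hu.
Qed.
Arguments O_rv {j k}.

Lemma O_rvrv j : rv (rv j) \in O j.
Proof.
apply/ObP; exists (mul (inv (gs (rv j))) (inv (gs j))); split.
  by rewrite /Stab /= !actM -rvP -gsP actK.
by rewrite actM -gsP actK rvP.
Qed.

Lemma rho_O j k : k \in O j -> Delta (gs k) = Delta (gs j).
Proof.
move=> /ObP [u [hu huk]].
have -> : Delta (gs k) = Delta (mul u (gs j)).
  by apply: (Delta_eq _ _ v); rewrite actM gsP gsP huk.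
by rewrite DeltaM (Delta1 _ _ hu) mul1r.
Qed.
Arguments rho_O {j k}.

Lemma rho_rv j : Delta (gs (rv j)) = (Delta (gs j))^-1.
Proof. by rewrite -DeltaV; apply: (Delta_eq _ _ v); rewrite gsP rvP. Qed.

Lemma rho_ratio j : Delta (gs j) * (#|O j|)%:R = (#|O (rv j)|)%:R.
Proof.
have h : adj v (act (gs j) v) by rewrite gsP.
by have := ratio _ h; rewrite /O gsP -rvP.
Qed.

Definition S : {set 'I_d} :=
  [set j | [forall k in O j, (j <= k)%N] && [forall k in O (rv j), (j < k)%N]].

Lemma S_min j k : j \in S -> k \in O j -> (j <= k)%N.
Proof. by rewrite inE => /andP[/forall_inP h _]; apply: h. Qed.
Arguments S_min {j k}.
Lemma S_lt j k : j \in S -> k \in O (rv j) -> (j < k)%N.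
Proof. by rewrite inE => /andP[_ /forall_inP h]; apply: h. Qed.
Arguments S_lt {j k}.

Lemma O_rv_eq j k : O j = O k -> O (rv j) = O (rv k).
Proof.
move=> E; have : j \in O k by rewrite -E O_self.
by move=> /O_rv /O_eq.
Qed.
Arguments O_rv_eq {j k}.

Lemma O_rv_rv j : O (rv (rv j)) = O j.
Proof. exact: O_eq (O_rvrv j). Qed.

Lemma same_O j j' : j \in S -> j' \in S -> O j = O j' -> j = j'.
Proof.
move=> hj hj' E; apply: val_inj; apply/eqP; rewrite eqn_leq.
rewrite (S_min hj) ?E ?O_self //.
by rewrite (S_min hj') // -E O_self.
Qed.
Arguments same_O {j j'}.

Lemma cross j j' : j \in S -> j' \in S -> O j = O (rv j') -> False.
Proof.
move=> hj hj' E.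
have h1 : (j' < j)%N by apply: (S_lt hj'); rewrite -E O_self.
have E2 : O (rv j) = O j' by rewrite (O_rv_eq E) O_rv_rv.
have h2 : (j < j')%N by apply: (S_lt hj); rewrite E2 O_self.
by have := ltn_trans h1 h2; rewrite ltnn.
Qed.
Arguments cross {j j'}.

Definition X j := O j :|: O (rv j).

Lemma card_X j : j \in S -> #|X j| = #|O j| + #|O (rv j)|.
Proof.
move=> hj; rewrite /X cardsU.
suff -> : #|O j :&: O (rv j)| = 0%N by rewrite subn0.
apply: eq_card0 => l; rewrite finset.in_setI [RHS]inE; apply/negbTE/negP => /andP[h1 h2].
exact: (cross hj hj (O_disj h1 h2)).
Qed.

Lemma X_uniq j j' k : j \in S -> j' \in S -> k \in X j -> k \in X j' -> j = j'.
Proof.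
move=> hj hj'; rewrite /X !finset.in_setU => /orP[h1|h1] /orP[h2|h2].
- exact: same_O (O_disj h1 h2).
- by case: (cross hj hj' (O_disj h1 h2)).
- by case: (cross hj' hj (O_disj h2 h1)).
- apply: same_O => //; rewrite -(O_rv_rv j) -(O_rv_rv j').
  exact: O_rv_eq (O_disj h1 h2).
Qed.
Arguments X_uniq {j j' k}.

Lemma sum_S_le : (\sum_(j in S) (#|O (rv j)| + #|O j|) <= d)%N.
Proof.
rewrite (eq_bigr (fun j => #|X j|)); last by move=> j hj; rewrite card_X // addnC.
have cE (A : {set 'I_d}) : #|A| = \sum_(k : 'I_d) (k \in A : nat).
  by rewrite -sum1_card big_mkcond /=; apply: eq_bigr => k _; case: (k \in A).
rewrite (eq_bigr (fun j => \sum_(k : 'I_d) (k \in X j : nat))); last by move=> j _; apply: cE.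
rewrite exchange_big /=.
rewrite -[X in (_ <= X)%N]card_ord -sum1_card.
apply: leq_sum => k _.
case: (pickP [pred j | (j \in S) && (k \in X j)]) => [j0 /andP[hj0 hk0] | none].
  rewrite (bigD1 j0) //= hk0 big1 //.
  move=> j /andP[hj hne]; case hk: (k \in X j) => //.
  by move: hne; rewrite (X_uniq hj hj0 hk hk0) eqxx.
rewrite big1 // => j hj; case hk: (k \in X j) => //.
by have := none j; rewrite /= hj hk.
Qed.

Lemma exists_min {A : {set 'I_d}} {a} : a \in A ->
  exists2 m, m \in A & forall k, k \in A -> (m <= k)%N.
Proof.
move=> Aa; case: (arg_minnP (fun k : 'I_d => val k) Aa) => m Am mmin.
by exists m.
Qed.

Lemma key m j : O j != O (rv j) -> m \in O j ->
  (forall k, k \in X j -> (m <= k)%N) -> m \in S.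
Proof.
move=> ne mj mmin; rewrite inE; apply/andP; split; apply/forall_inP => k hk.
  by apply: mmin; rewrite /X finset.in_setU -(O_eq mj) hk.
have hk' : k \in O (rv j) by rewrite -(O_rv_eq (O_eq mj)).
rewrite ltn_neqAle mmin ?andbT; last by rewrite /X finset.in_setU hk' orbT.
apply/negP => /eqP mk.
have mk' : m = k by apply: val_inj.
by move: ne; rewrite (O_disj mj (_ : m \in O (rv j))) ?eqxx // mk'.
Qed.
Arguments key {m j}.

Definition rl := [seq Delta (gs j) | j <- enum S].

Lemma rl_pos x : x \in rl -> 0 < x.
Proof. by move=> /mapP [j _ ->]; apply: Delta_pos. Qed.

Lemma rl_nz i : (i < size rl)%N -> rl`_i != 0.
Proof. by move=> hi; rewrite gt_eqF // rl_pos // mem_nth. Qed.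

Lemma gen_S j : j \in S -> gen_mulgroup rl (Delta (gs j)).
Proof. by move=> hj; apply: gen_mem; apply/mapP; exists j; rewrite ?mem_enum. Qed.

Lemma gen_rho j : gen_mulgroup rl (Delta (gs j)).
Proof.
have pos : (0 < #|O j|)%N by apply/card_gt0P; exists j; apply: O_self.
case: (eqVneq (O j) (O (rv j))) => [eqO|neO].
  have := rho_ratio j; rewrite -eqO -{2}[(#|O j|)%:R]mul1r => /mulIf.
  rewrite pnatr_eq0 -lt0n pos => /(_ isT) ->; exact: gen1.
have jX : j \in X j by rewrite /X finset.in_setU O_self.
have [m mX mmin] := exists_min jX.
move: (mX); rewrite /X finset.in_setU => /orP[mO|mO].
  rewrite -(rho_O mO); apply: gen_S; exact: (key neO mO mmin).
have ne' : O (rv j) != O (rv (rv j)) by rewrite O_rv_rv eq_sym.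
have mS : m \in S.
  apply: (key ne' mO) => k; rewrite /X finset.in_setU O_rv_rv => hk.
  by apply: mmin; rewrite /X finset.in_setU orbC.
have := rho_O mO; rewrite rho_rv => E.
have -> : Delta (gs j) = (Delta (gs m))^-1 by rewrite E invrK.
by apply: genV; apply: gen_S.
Qed.

Lemma gen_all h : gen_mulgroup rl (Delta h).
Proof.
have hc : clos_refl_trans V adj v (act h v) by case: HCA => _ hc _ _ _; apply: hc.
suff H : forall x, clos_refl_trans_n1 V adj v x -> forall h, act h v = x -> gen_mulgroup rl (Delta h).
  by apply: (H _ (clos_rt_rtn1 _ _ _ _ hc)).
move=> {hc h} x; elim => [| y z ayz _ IH] h hx.
  by rewrite (Delta1 h v hx); apply: gen1.
have [g hg] := trans_act v y.
have IHg := IH g hg.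
have az : adj v (act (inv g) z).
  have := proj1 (adj_act (inv g) y z) ayz; by rewrite -hg actK.
have [j hj] := e_surj _ az.
have -> : Delta h = Delta g * Delta (gs j).
  rewrite -DeltaM; apply: (Delta_eq _ _ v); by rewrite actM gsP hj actKV hx.
by apply: genM; [exact: rl_nz | exact: IHg | exact: gen_rho].
Qed.

Lemma gen_range : gen_mulgroup rl = range Delta.
Proof.
apply/seteqP; split; last by move=> x [h _ <-]; exact: gen_all.
apply: gen_sub.
- by exists one => //; exact: Delta_one.
- by move=> x y [g _ <-] [h _ <-]; exists (mul g h) => //; rewrite DeltaM.
- by move=> x [g _ <-]; exists (inv g) => //; rewrite DeltaV.
- move=> i hi; have := mem_nth 0 hi; move=> /mapP [j _ ->].
  by exists (gs j).
Qed.

Lemma main_sec : (1 < d)%N -> exists2 a, sums_set (range Delta) a & (a <= d)%N.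
Proof.
move=> d2.
case Es: (enum S) => [|j0 s'].
  have r1 : range Delta = [set 1].
    apply/seteqP; split => x.
      move=> [h _ <-]; have := gen_all h; rewrite /rl Es /= => -[e0 [_ ->]].
      by rewrite big_ord0.
    by move=> ->; exists one => //; exact: Delta_one.
  exists 2%N => //; exists [:: (1%N, 1%N)]; split; [done|done| |by rewrite big_seq1].
  rewrite r1 /= divr1; apply/seteqP; split => x.
    by move=> /gen_single [z ->]; rewrite /set1 /= mulr1n exp1rz.
  by move=> ->; apply: gen1.
pose ps := [seq (#|O (rv j)|, #|O j|) | j <- enum S].
pose a := (\sum_(pq <- ps) (pq.1 + pq.2))%N.
apply: (@ex_intro2 _ _ _ a); last first.
  by rewrite /a big_map big_enum /=; apply: sum_S_le.
exists ps; split => //.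
- by rewrite size_map Es.
- apply/allP => pq /mapP [j _ ->] /=.
  by apply/andP; split; apply/card_gt0P; [exists (rv j) | exists j]; apply: O_self.
- rewrite -gen_range /rl -map_comp; congr gen_mulgroup; apply: eq_map => j /=.
  have pos : (0 < #|O j|)%N by apply/card_gt0P; exists j; apply: O_self.
  by rewrite -rho_ratio mulfK // pnatr_eq0 -lt0n pos.
Qed.

Lemma d_ge2 : ~ compact [set: T] -> (1 < d)%N.
Proof.
move=> nc; rewrite ltnNge; apply/negP => dle; apply: nc.
have conn x : clos_refl_trans_n1 V adj v x.
  by apply: clos_rt_rtn1; case: HCA => _ hc _ _ _; apply: hc.
have [d0|d1] : d = 0%N \/ d = 1%N by move: dle; case: (d) => [|[|]] //; auto.
  have onlyv x : clos_refl_trans_n1 V adj v x -> x = v.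
    elim => // y z ayz _ IH; rewrite IH in ayz.
    by have [i _] := e_surj _ ayz; move: (ltn_ord i); move: (nat_of_ord i) => n; rewrite d0.
  have -> : [set: T] = Stab v.
    apply/seteqP; split => h // _; exact: (onlyv _ (conn (act h v))).
  exact: compact_stab.
have i0lt : (0 < d)%N by rewrite d1.
pose i0 := Ordinal i0lt.
have uniq_i (i : 'I_d) : i = i0 by apply: val_inj => /=; move: (ltn_ord i); move: (nat_of_ord i) => n; rewrite d1; case: n.
set w := e i0; set g := gs i0.
have gv : act g v = w by rewrite /g gsP.
have nbw z : adj v z -> z = w by move=> h; have [i <-] := e_surj _ h; rewrite (uniq_i i).
have twov x : clos_refl_trans_n1 V adj v x -> x = v \/ x = w.
  elim; first by left.
  move=> y z ayz _ [E|E]; rewrite E in ayz; first by right; apply: nbw.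
  left.
  have h1 : adj v (act (inv g) z) by have := proj1 (adj_act (inv g) _ _) ayz; rewrite -gv actK.
  have h2 : adj v (act (inv g) v).
    have := proj1 (adj_act (inv g) _ _) (adj_sym _ _ (e_adj i0)); rewrite -/w -gv actK => h.
    exact: h.
  have := nbw _ h1; rewrite -(nbw _ h2) => E2.
  by rewrite -(actKV g z) E2 actKV.
have -> : [set: T] = Stab v `|` [set mul g a | a in Stab v].
  apply/seteqP; split => h // _.
  case: (twov _ (conn (act h v))) => E; [by left | right].
  exists (mul (inv g) h); last by rewrite mulKVg.
  by rewrite /Stab /= actM E -gv actK.
apply: compactU; first exact: compact_stab.
by apply: compact_imgl; exact: compact_stab.
Qed.
End Main.

Lemma nt_core (a b p q m : nat) : (0 < a)%N -> (0 < b)%N -> (0 < p)%N -> (0 < q)%N ->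
  (0 < m)%N -> coprime p q -> (a * q ^ m = p ^ m * b)%N -> (p <= a)%N /\ (q <= b)%N.
Proof.
move=> a0 b0 p0 q0 m0 cpq E.
have cm : coprime (p ^ m) (q ^ m) by rewrite coprimeXl // coprimeXr.
have h1 : (p ^ m %| a)%N.
  by rewrite -(Gauss_dvdl _ cm) E dvdn_mulr.
have h2 : (q ^ m %| b)%N.
  have cm' : coprime (q ^ m) (p ^ m) by rewrite coprime_sym.
  by rewrite -(Gauss_dvdr _ cm') -E dvdn_mull.
split.
  apply: leq_trans (dvdn_leq a0 h1); rewrite -{1}(expn1 p); exact: leq_pexp2l.
apply: leq_trans (dvdn_leq b0 h2); rewrite -{1}(expn1 q); exact: leq_pexp2l.
Qed.

Lemma ratio_nat (R : realType) (a b P Q m : nat) : (0 < b)%N -> (0 < Q)%N ->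
  (a%:R / b%:R : R) = P%:R ^+ m / Q%:R ^+ m -> (a * Q ^ m = P ^ m * b)%N.
Proof.
move=> b0 Q0 /eqP; rewrite eqr_div; first last.
- by rewrite expf_eq0 pnatr_eq0 negb_and -lt0n Q0 orbT.
- by rewrite pnatr_eq0 -lt0n b0.
by rewrite -!natrX -!natrM eqr_nat => /eqP.
Qed.

Lemma nt (R : realType) (p q : nat) (ps : seq (nat * nat)) :
  (0 < p)%N -> (0 < q)%N -> coprime p q -> (0 < size ps)%N ->
  all (fun pq => (0 < pq.1)%N && (0 < pq.2)%N) ps ->
  gen_mulgroup [seq (pq.1)%:R / (pq.2)%:R | pq <- ps] = gen_mulgroup [:: (p%:R / q%:R : R)] ->
  (p + q <= \sum_(pq <- ps) (pq.1 + pq.2))%N.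
Proof.
move=> p0 q0 cpq sz allp E.
have term pq : pq \in ps -> (pq.1 + pq.2 <= \sum_(pq <- ps) (pq.1 + pq.2))%N.
  by move=> h; rewrite (big_rem _ h) /= leq_addr.
have pos pq : pq \in ps -> (0 < pq.1)%N && (0 < pq.2)%N by move=> h; exact: (allP allp pq h).
case: (eqVneq p q) => [epq | npq].
  move: cpq; rewrite -epq /coprime gcdnn => /eqP p1; rewrite p1.
  move: sz; case Eps: ps => [|pq s] // _.
  have hin : pq \in ps by rewrite Eps mem_head.
  rewrite -Eps; apply: leq_trans (term _ hin).
  by have /andP[h1 h2] := pos _ hin; apply: leq_add.
have qR : (q%:R : R) != 0 by rewrite pnatr_eq0 -lt0n.
have x1 : (p%:R / q%:R : R) != 1.
  apply/negP => /eqP h; move: npq; rewrite -(eqr_nat R) -[p%:R](divfK qR) h mul1r eqxx.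
  by [].
have /hasP [pq hin hne] : has (fun pq : nat * nat => (pq.1%:R / pq.2%:R : R) != 1) ps.
  apply/negPn/negP => /hasPn H.
  have sub1 : gen_mulgroup [seq (pq.1)%:R / (pq.2)%:R | pq <- ps] `<=` [set (1 : R)].
    apply: gen_sub => //.
    - by move=> x y -> ->; rewrite mulr1.
    - by move=> x ->; rewrite invr1.
    - move=> i hi; have := mem_nth 0 hi; move=> /mapP [pq' hpq' ->].
      by have := H pq' hpq'; rewrite negbK => /eqP.
  have : gen_mulgroup [:: (p%:R / q%:R : R)] (p%:R / q%:R) by apply: (gen_nth _ _ 0).
  by rewrite -E => /sub1 h; move: x1; rewrite h eqxx.
have : gen_mulgroup [:: (p%:R / q%:R : R)] (pq.1%:R / pq.2%:R).
  by rewrite -E; apply: gen_mem; apply/mapP; exists pq.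
move=> /gen_single [z hz].
have /andP[a0 b0] := pos _ hin.
apply: leq_trans (term _ hin).
case: z hz => [[|n]|n] hz.
- by move: hne; rewrite hz expr0z eqxx.
- have E1 : (pq.1%:R / pq.2%:R : R) = p%:R ^+ n.+1 / q%:R ^+ n.+1.
    transitivity ((p%:R / q%:R) ^+ n.+1 : R); first exact: hz.
    by rewrite expr_div_n.
  have [h1 h2] := nt_core _ _ _ _ _ a0 b0 p0 q0 (ltn0Sn n) cpq (ratio_nat R _ _ _ _ _ b0 q0 E1).
  by apply: leq_add.
- have cqp : coprime q p by rewrite coprime_sym.
  have E1 : (pq.1%:R / pq.2%:R : R) = q%:R ^+ n.+1 / p%:R ^+ n.+1.
    transitivity (((p%:R / q%:R) ^+ n.+1)^-1 : R); first exact: hz.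
    by rewrite expr_div_n invf_div.
  have [h1 h2] := nt_core _ _ _ _ _ a0 b0 q0 p0 (ltn0Sn n) cqp (ratio_nat R _ _ _ _ _ b0 p0 E1).
  by rewrite addnC; apply: leq_add.
Qed.

Lemma part1 (T : ptopologicalType) (mul : T -> T -> T) (inv : T -> T) (one : T)
  (HG : is_tdlc_group mul inv one) (Hnc : ~ compact [set: T])
  (R : realType) (mu : {measure set (borel T) -> \bar R})
  (Hmu : right_haar mul mu) (Delta : T -> R) (HDelta : modular_function_of mul mu Delta)
  (V : Type) (adj : V -> V -> Prop) (act : T -> V -> V)
  (HCA : cayley_abels_graph mul one adj act) (v : V) (d : nat)
  (Hc : card_eq [set w | adj v w] `I_d) :
  exists2 a, sums_set (range Delta) a & (a <= d)%N.
Proof.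
have /card_set_bijP [f [fA finj fsurj]] := Hc.
have He : forall i : 'I_d, exists w, adj v w /\ f w = val i.
  by move=> i; have [w hw fw] := fsurj (val i) (ltn_ord i); exists w.
have [e eP] := choice He.
have e_inj : injective e.
  by move=> i j E; apply: val_inj; rewrite -(eP i).2 -(eP j).2 E.
have e_adj : forall i, adj v (e i) by move=> i; exact: (eP i).1.
have e_surj : forall w, adj v w -> exists i, e i = w.
  move=> w hw; have fw : (f w < d)%N by exact: (fA w hw).
  exists (Ordinal fw); apply: finj; rewrite ?inE //=.
  by rewrite (eP (Ordinal fw)).2.
have Hg : forall j : 'I_d, exists g, act g v = e j.
  by move=> j; case: HCA => _ _ _ _ [tr _]; apply: tr.
have [gs gsP] := choice Hg.
have Hr : forall j : 'I_d, exists i, e i = act (inv (gs j)) v.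
  move=> j; apply: e_surj.
  by apply: (adj_inv T mul inv one HG V adj act HCA v); rewrite gsP.
have [rv rvP] := choice Hr.
exact: (main_sec T mul inv one HG R mu Hmu Delta HDelta V adj act HCA v d e e_inj e_adj e_surj gs rv gsP rvP
  (d_ge2 T mul inv one HG V adj act HCA v d e e_adj e_surj gs gsP Hnc)).
Qed.

Theorem theorem4p4 (T : ptopologicalType) (mul : T -> T -> T) (inv : T -> T) (one : T)
  (HG : is_tdlc_group mul inv one)
  (Hcg : compactly_generated mul inv one)
  (Hnc : ~ compact [set: T])
  (R : realType) (mu : {measure set (borel T) -> \bar R})
  (Hmu : right_haar mul mu) (Hmu0 : mu [set: T] <> 0%E)
  (Delta : T -> R) (HDelta : modular_function_of mul mu Delta) :
  (forall (V : Type) (adj : V -> V -> Prop) (act : T -> V -> V),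
     cayley_abels_graph mul one adj act ->
     forall (v : V) (d : nat), card_eq [set w | adj v w] `I_d ->
     exists2 a, sums_set (range Delta) a & (a <= d)%N)
  /\
  (forall p q : nat, (0 < p)%N -> (0 < q)%N -> coprime p q ->
     range Delta = gen_mulgroup [:: p%:R / q%:R] ->
     forall (V : Type) (adj : V -> V -> Prop) (act : T -> V -> V),
       cayley_abels_graph mul one adj act ->
       forall (v : V) (d : nat), card_eq [set w | adj v w] `I_d ->
       (p + q <= d)%N).
Proof.
split.
  move=> V adj act HCA v d Hc.
  exact: (part1 T mul inv one HG Hnc R mu Hmu Delta HDelta V adj act HCA v d Hc).
move=> p q p0 q0 cpq Hr V adj act HCA v d Hc.
have [a [ps [sz allp gens ->]] ale] :=
  part1 T mul inv one HG Hnc R mu Hmu Delta HDelta V adj act HCA v d Hc.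
apply: leq_trans ale.
apply: (nt R p q ps p0 q0 cpq sz allp).
by rewrite gens Hr.
Qed.
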